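(* Let $s,k,T\in\mathbb{N}$ and let $\mathcal{D}$ be any distribution on $\{0,1\}^T$. Then \[ \mathbf{S}^{s,k}[\mathcal{D}]\le \Pr_{w\sim\mathcal{D}}\bigl[\text{there is a decomposition } w=xyz \text{ with } |x|=s-1,\ |y|\ge k+1, \text{ such that } \mu_x(y)\ge 0\bigr]. \]
   Context: Characteristic strings and forks. A characteristic string is $w=w_1\dots w_n\in\{0,1\}^n$; index $i$ is honest if $w_i=0$ and adversarial if $w_i=1$. A fork for $w$ is a rooted tree with edges directed away from the root $r$ and labeling $\ell:V\to\{0,\dots,n\}$ with (F1) $\ell(r)=0$; (F2) labels strictly increasing along directed paths; (F3) each honest index labels exactly one vertex; (F4) for honest $i<j$ the vertex labeled $i$ has strictly smaller depth than the vertex labeled $j$. Write $F\vdash w$. A vertex is honest if it is the root or labeled by an honest index. A tine is a directed path from the root; its length is its number of edges, $\ell(t)$ the label of its last vertex. For $x$ a prefix of $w$, $F\vdash x$, $F'\vdash w$, $F\sqsubseteq F'$ means $F$ is a subgraph of $F'$ with identical labels. A fork is closed if every leaf is honest; a closed fork has a unique longest tine $\hat t$. Reach and relative margin. For closed $F\vdash w$ and tine $t$: $\mathrm{gap}(t)=\mathrm{length}(\hat t)-\mathrm{length}(t)$, $\mathrm{reserve}(t)=|\{i:w_i=1,\ i>\ell(t)\}|$, $\mathrm{reach}(t)=\mathrm{reserve}(t)-\mathrm{gap}(t)$. For $w=xy$, tines are disjoint over $y$ if they share no edge terminating at a vertex with label $>|x|$ (a tine may be paired with itself). $\mu_x(F)=\max\min\{\mathrm{reach}(t_1),\mathrm{reach}(t_2)\}$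 over pairs disjoint over $y$, and $\mu_x(y)=\max\{\mu_x(F):F\vdash xy\text{ closed}\}$. Settlement. For a fork $F\vdash w_1\dots w_t$ with $s+k\le t$, slot $s$ is not $k$-settled in $F$ if $F$ contains two tines of maximum length which either contain different vertices labeled $s$, or one contains a vertex labeled $s$ and the other does not. Settlement game. For a distribution $\mathcal{D}$ on $\{0,1\}^T$, the $(\mathcal{D},T;s,k)$-settlement game between an adversary $\mathcal{A}$ and a deterministic challenger: (1) $w\in\{0,1\}^T$ is drawn from $\mathcal{D}$ and given to $\mathcal{A}$; (2) $A_0$ is the single-vertex fork for the empty string; (3) for $t=1,\dots,T$: (a) if $w_t=0$, the challenger forms $F_t\vdash w_1\dots w_t$ by adding one vertex labeled $t$ to the end of a longest path of $A_{t-1}$ (ties broken by $\mathcal{A}$); (b) if $w_t=1$, $\mathcal{A}$ chooses an arbitrary fork $F_t\vdash w_1\dots w_t$ with $A_{t-1}\sqsubseteq F_t$; (c) $\mathcal{A}$ chooses an arbitrary fork $A_t\vdash w_1\dots w_t$ with $F_t\sqsubseteq A_t$. $\mathcal{A}$ wins if slot $s$ is not $k$-settled in some $A_t$ with $t\ge s+k$. $\mathbf{S}^{s,k}[\mathcal{D}]=\max_{\mathcal{A}}\Pr[\mathcal{A}\text{ wins}]$. *)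

(* Defs.v *)
From HB Require Import structures.
From mathcomp Require Import all_boot all_order all_algebra.
From mathcomp Require Import boolp.
Set Implicit Arguments. Unset Strict Implicit. Unset Printing Implicit Defensive.
Import Order.TTheory GRing.Theory Num.Theory.

(* A characteristic string is a [seq bool]; [true] = 1 (adversarial), [false] = 0 (honest).
   Indices are 1-based: w_i = nth false w i.-1. *)
Definition sym (w : seq bool) (i : nat) : bool := nth false w i.-1.
Definition honest_idx (w : seq bool) (i : nat) : bool := (0 < i <= size w) && ~~ sym w i.
Definition adv_idx (w : seq bool) (i : nat) : bool := (0 < i <= size w) && sym w i.

(* A fork is a list of vertices; vertex v (v < size F) is the entry (parent, label).
   Vertex 0 is the root (its parent field is ignored). *)
Definition fork := seq (nat * nat).
Definition par (F : fork) (v : nat) : nat := (nth (0, 0) F v).1.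
Definition lab (F : fork) (v : nat) : nat := (nth (0, 0) F v).2.

Fixpoint anc_fuel (n : nat) (F : fork) (v : nat) : seq nat :=
  if v == 0 then [:: 0] else
  match n with 0 => [:: v] | n'.+1 => v :: anc_fuel n' F (par F v) end.
Definition tine (F : fork) (v : nat) : seq nat := anc_fuel (size F) F v.
Definition depth (F : fork) (v : nat) : nat := (size (tine F v)).-1.

Definition is_fork (w : seq bool) (F : fork) : Prop :=
  [/\ 0 < size F,
      lab F 0 = 0,
      (forall v, 0 < v < size F ->
         [/\ par F v < size F, lab F (par F v) < lab F v & lab F v <= size w]),
      (forall i, honest_idx w i ->
         count (fun v => lab F v == i) (iota 1 (size F).-1) = 1)
    & (forall i j u v, honest_idx w i -> honest_idx w j -> i < j ->
         0 < u < size F -> 0 < v < size F -> lab F u = i -> lab F v = j ->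
         depth F u < depth F v)].

Definition honest_vertex (w : seq bool) (F : fork) (v : nat) : bool :=
  (v == 0) || honest_idx w (lab F v).
Definition is_leaf (F : fork) (v : nat) : bool :=
  (v < size F) && ~~ has (fun u => par F u == v) (iota 1 (size F).-1).
Definition closed (w : seq bool) (F : fork) : Prop :=
  forall v, is_leaf F v -> honest_vertex w F v.

Definition maxlen (F : fork) : nat := \max_(v < size F) depth F v.

Definition gap (F : fork) (v : nat) : nat := maxlen F - depth F v.
Definition reserve (w : seq bool) (F : fork) (v : nat) : nat :=
  count (fun i => adv_idx w i && (lab F v < i)) (iota 1 (size w)).
Definition reach (w : seq bool) (F : fork) (v : nat) : int :=
  (reserve w F v)%:Z - (gap F v)%:Z.

(* tines ending at t1, t2 are disjoint over y (where m = |x|): they share no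
   edge terminating at a vertex with label > m *)
Definition disjoint_over (m : nat) (F : fork) (t1 t2 : nat) : bool :=
  all (fun u => (u \in tine F t2) ==> (lab F u <= m)) (tine F t1).

(* mu_x(F) for F |- xy, m = |x|, w = xy; the pair (root, root) is always admissible *)
Definition mu_fork (m : nat) (w : seq bool) (F : fork) : int :=
  \big[Num.max/Num.min (reach w F 0) (reach w F 0)]_(p : 'I_(size F) * 'I_(size F)
      | disjoint_over m F p.1 p.2) Num.min (reach w F p.1) (reach w F p.2).

(* mu_x(y) >= 0, where mu_x(y) is the maximum of mu_x(F) over closed F |- xy *)
Definition rel_margin_nonneg (x y : seq bool) : Prop :=
  exists F, [/\ is_fork (x ++ y) F, closed (x ++ y) F & (0 <= mu_fork (size x) (x ++ y) F)%R].

Definition not_settled (s : nat) (F : fork) : Prop :=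
  exists u1 u2, [/\ u1 < size F, u2 < size F, depth F u1 = maxlen F, depth F u2 = maxlen F &
    (exists a b, [/\ a \in tine F u1, b \in tine F u2, lab F a = s, lab F b = s & a <> b])
    \/ ((exists a, a \in tine F u1 /\ lab F a = s) /\
        ~ (exists b, b \in tine F u2 /\ lab F b = s))].

(* F is a subgraph of G with identical labels: G extends F's vertex list *)
Definition subfork (F G : fork) : bool := prefix F G.

(* A play of the game: F_t = Fp t (t >= 1), A_t = Ap t (t >= 0). *)
Record play := Play { Fp : nat -> fork; Ap : nat -> fork }.

Definition legal_play (w : seq bool) (P : play) : Prop :=
  Ap P 0 = [:: (0, 0)] /\
  forall t, 0 < t <= size w ->
    (if sym w t then
       is_fork (take t w) (Fp P t) /\ subfork (Ap P t.-1) (Fp P t)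
     else exists v, [/\ v < size (Ap P t.-1), depth (Ap P t.-1) v = maxlen (Ap P t.-1)
                      & Fp P t = rcons (Ap P t.-1) (v, t)])
    /\ is_fork (take t w) (Ap P t) /\ subfork (Fp P t) (Ap P t).

Definition wins (s k : nat) (w : seq bool) (P : play) : Prop :=
  exists t, s + k <= t <= size w /\ not_settled s (Ap P t).

Definition distribution (R : realFieldType) (T : nat) (D : {ffun T.-tuple bool -> R}) : Prop :=
  (forall w, (0 <= D w)%R) /\ (\sum_w D w = 1)%R.

Definition Pr (R : realFieldType) (T : nat) (D : {ffun T.-tuple bool -> R})
  (E : T.-tuple bool -> Prop) : R := (\sum_(w | `[< E w >]) D w)%R.

(* Main.v *)
Require Import Defs.
From HB Require Import structures.
From mathcomp Require Import all_boot all_order all_algebra.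
From mathcomp Require Import boolp.
Import Order.TTheory GRing.Theory Num.Theory.
Set Implicit Arguments. Unset Strict Implicit. Unset Printing Implicit Defensive.

Lemma andPi (a b : bool) : a -> b -> a && b.
Proof. by move=> -> ->. Qed.

Definition wf (F : fork) : Prop :=
  [/\ 0 < size F, lab F 0 = 0 &
     forall v, 0 < v < size F -> par F v < size F /\ lab F (par F v) < lab F v].

Lemma is_fork_wf w F : is_fork w F -> wf F.
Proof. case=> h1 h2 h3 _ _; split=> // v /h3 []; by []. Qed.

Lemma lab_ind F (P : nat -> Prop) : wf F -> P 0 ->
  (forall v, 0 < v < size F -> P (par F v) -> P v) -> forall v, v < size F -> P v.
Proof.
case=> n0 l0 hp P0 PS v.
have [m] : exists m, lab F v < m by exists (lab F v).+1.
elim: m v => // m IH v lv vn.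
case: (posnP v) => [->//|v0].
have := hp v; rewrite v0 vn => /(_ isT) [pn pl].
apply: PS; first by rewrite v0.
apply: IH => //; exact: leq_trans pl lv.
Qed.

Definition cc F v := anc_fuel (lab F v) F v.

Lemma anc_indep F : wf F -> forall f g v, v < size F -> lab F v <= f -> lab F v <= g ->
  anc_fuel f F v = anc_fuel g F v.
Proof.
case=> n0 l0 hp; elim=> [|f IH] g v vn lf lg.
  case: g lg => [|g] lg /=; case: eqP => // /eqP v0.
  have := hp v; rewrite lt0n v0 vn => /(_ isT) [_].
  by move: lf; rewrite leqn0 => /eqP ->.
case: (posnP v) => [->|v0]; first by case: g {lg}.
have := hp v; rewrite v0 vn => /(_ isT) [pn pl].
case: g lg => [|g] lg.
  by move: lg; rewrite leqn0 => /eqP e; rewrite e in pl.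
rewrite /= (negbTE (lt0n_neq0 v0)); congr (_ :: _); apply: IH => //.
  by rewrite -ltnS (leq_trans pl).
by rewrite -ltnS (leq_trans pl).
Qed.

Lemma anc0 f F : anc_fuel f F 0 = [:: 0].
Proof. by case: f. Qed.

Lemma cc0 F : cc F 0 = [:: 0].
Proof. exact: anc0. Qed.

Lemma ccS F v : wf F -> 0 < v < size F -> cc F v = v :: cc F (par F v).
Proof.
move=> wF /andP[v0 vn]; have [_ _ hp] := wF.
have := hp v; rewrite v0 vn => /(_ isT) [pn pl].
rewrite /cc; case E: (lab F v) pl => [|l] pl //=.
rewrite (negbTE (lt0n_neq0 v0)); congr (_ :: _).
by apply: anc_indep.
Qed.

Definition labgt F := [rel a b | lab F b < lab F a].

Lemma cc_props F v : wf F -> v < size F ->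
  [/\ sorted (labgt F) (cc F v), all (fun u => u < size F) (cc F v) & head 0 (cc F v) = v].
Proof.
move=> wF; have [n0 _ hp] := wF; move: v.
apply: (@lab_ind F (fun v => [/\ sorted (labgt F) (cc F v), all (fun u => u < size F) (cc F v) & head 0 (cc F v) = v]) wF).
  by rewrite cc0 /= n0.
move=> v /andP[v0 vn] [s a h]; rewrite ccS ?v0 ?vn //.
have := hp v; rewrite v0 vn => /(_ isT) [pn pl].
split => /=; last by [].
  case: (cc F (par F v)) s h => //= x l s hx; subst x; by rewrite pl.
by rewrite vn.
Qed.

Lemma labgt_trans F : transitive (labgt F).
Proof. by move=> a b c /= h1 h2; exact: ltn_trans h2 h1. Qed.

Lemma cc_uniq F v : wf F -> v < size F -> uniq (cc F v).
Proof.
move=> wF vn; have [s _ _] := cc_props wF vn.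
apply: sorted_uniq s; [exact: labgt_trans | by move=> x /=; rewrite ltnn].
Qed.

Lemma cc_size F v : wf F -> v < size F -> size (cc F v) <= size F.
Proof.
move=> wF vn; have [_ a _] := cc_props wF vn.
rewrite -(size_iota 0 (size F)); apply: uniq_leq_size; first exact: cc_uniq.
by move=> x xin; rewrite mem_iota /=; exact: (allP a).
Qed.

Lemma anc_cc F : wf F -> forall f v, v < size F -> size (cc F v) <= f.+1 -> anc_fuel f F v = cc F v.
Proof.
move=> wF; have [_ _ hp] := wF; elim=> [|f IH] v vn.
  case: (posnP v) => [->|v0]; first by rewrite anc0 cc0.
  have := hp v; rewrite v0 vn => /(_ isT) [pn pl].
  rewrite ccS ?v0 ?vn //= (negbTE (lt0n_neq0 v0)); by case: (cc F (par F v)).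
case: (posnP v) => [->|v0]; first by rewrite anc0 cc0.
have := hp v; rewrite v0 vn => /(_ isT) [pn pl].
rewrite ccS ?v0 ?vn //= (negbTE (lt0n_neq0 v0)) ltnS => h.
by rewrite IH.
Qed.

Lemma tine_cc F v : wf F -> v < size F -> tine F v = cc F v.
Proof. move=> wF vn; apply: anc_cc => //; exact: leqW (cc_size wF vn). Qed.

Lemma tine0 F : tine F 0 = [:: 0].
Proof. exact: anc0. Qed.

Lemma wf_par F v : wf F -> 0 < v < size F -> par F v < size F /\ lab F (par F v) < lab F v.
Proof. by case=> _ _ hp /hp. Qed.

Lemma tineS F v : wf F -> 0 < v < size F -> tine F v = v :: tine F (par F v).
Proof.
move=> wF hv; have [pn _] := wf_par wF hv.
rewrite !tine_cc //; first exact: ccS. by case/andP: hv.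
Qed.

Lemma tine_props F v : wf F -> v < size F ->
  [/\ sorted (labgt F) (tine F v), all (fun u => u < size F) (tine F v) & head 0 (tine F v) = v].
Proof. by move=> wF vn; rewrite tine_cc //; exact: cc_props. Qed.

Lemma tine_self F v : wf F -> v < size F -> v \in tine F v.
Proof.
move=> wF vn; have [_ _] := tine_props wF vn.
have : tine F v != [::] by rewrite /tine; case: (size F) => [|n] /=; case: (v == 0).
case: (tine F v) => [|x l] //= _ ->; by rewrite inE eqxx.
Qed.

Lemma tine_lt F v a : wf F -> v < size F -> a \in tine F v -> a < size F.
Proof. move=> wF vn; have [_ al _] := tine_props wF vn; exact: (allP al). Qed.

Lemma lab_pos F v : wf F -> 0 < v < size F -> 0 < lab F v.
Proof. by move=> wF /(wf_par wF) [_ h]; exact: leq_ltn_trans h. Qed.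

Lemma root_tine F v : wf F -> v < size F -> 0 \in tine F v.
Proof.
move=> wF; move: v; apply: (@lab_ind F (fun v => 0 \in tine F v) wF).
  by rewrite tine0 inE.
by move=> v hv IH; rewrite tineS // inE IH orbT.
Qed.

Lemma tine_drop F v k : wf F -> v < size F -> k < size (tine F v) ->
  drop k (tine F v) = tine F (nth 0 (tine F v) k).
Proof.
move=> wF; elim: k v => [|k IH] v vn.
  rewrite drop0 => _; have [_ _ h] := tine_props wF vn.
  by rewrite nth0 h.
case: (posnP v) => [->|v0]; first by rewrite tine0.
have hv : 0 < v < size F by rewrite v0 vn.
have [pn _] := wf_par wF hv.
rewrite tineS //= ltnS => h; exact: IH.
Qed.

Lemma tine_suffix F v a : wf F -> v < size F -> a \in tine F v ->
  exists p, tine F v = p ++ tine F a.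
Proof.
move=> wF vn ain; exists (take (index a (tine F v)) (tine F v)).
have e := nth_index 0 ain.
rewrite -[in tine F a]e -tine_drop ?index_mem //; by rewrite cat_take_drop.
Qed.

Lemma tine_sub F v a : wf F -> v < size F -> a \in tine F v -> {subset tine F a <= tine F v}.
Proof. move=> wF vn ain x xa; have [p ->] := tine_suffix wF vn ain; by rewrite mem_cat xa orbT. Qed.

Lemma tine_lab_le F v a : wf F -> v < size F -> a \in tine F v -> lab F a <= lab F v.
Proof.
move=> wF; move: v; apply: (@lab_ind F (fun v => a \in tine F v -> lab F a <= lab F v) wF).
  by rewrite tine0 inE => /eqP ->.
move=> v hv IH; rewrite tineS // inE => /orP[/eqP -> //|/IH h].
have [_ pl] := wf_par wF hv; exact: leq_trans h (ltnW pl).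
Qed.

Lemma tine_lab_lt F v a : wf F -> v < size F -> a \in tine F v -> a != v -> lab F a < lab F v.
Proof.
move=> wF vn; case: (posnP v) => [->|v0]; first by rewrite tine0 inE => ->.
have hv : 0 < v < size F by rewrite v0 vn.
have [pn pl] := wf_par wF hv.
rewrite tineS // inE => /orP[->//|h] _.
exact: leq_ltn_trans (tine_lab_le wF pn h) pl.
Qed.

Lemma tine_anc F v a b : wf F -> v < size F -> a \in tine F v -> b \in tine F v ->
  lab F a <= lab F b -> a \in tine F b.
Proof.
move=> wF; move: v; apply: (@lab_ind F (fun v => a \in tine F v -> b \in tine F v ->
  lab F a <= lab F b -> a \in tine F b) wF).
  by rewrite tine0 !inE => /eqP -> /eqP ->; rewrite tine0 inE.
move=> v hv IH; have [pn pl] := wf_par wF hv.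
have vn : v < size F by case/andP: hv.
rewrite tineS // !inE => /orP[/eqP ea|ha] /orP[/eqP eb|hb] hl.
- by rewrite ea eb tine_self.
- move: hl; rewrite ea => hl; have h1 := tine_lab_le wF pn hb.
  by have := leq_ltn_trans (leq_trans hl h1) pl; rewrite ltnn.
- by rewrite eb tineS // inE ha orbT.
- exact: IH.
Qed.

Lemma tine_lab_inj F v a b : wf F -> v < size F -> a \in tine F v -> b \in tine F v ->
  lab F a = lab F b -> a = b.
Proof.
move=> wF vn ha hb e.
have ab := tine_anc wF vn ha hb (eq_leq e).
apply/eqP; apply: contraTT (eq_leq (esym e)) => ne.
rewrite -ltnNge; apply: tine_lab_lt ab ne => //; exact: tine_lt hb.
Qed.

Lemma tine_child F h a : wf F -> h < size F -> a \in tine F h -> a != h ->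
  exists c, [/\ c \in tine F h, 0 < c < size F & par F c = a].
Proof.
move=> wF; move: h; apply: (@lab_ind F (fun h => a \in tine F h -> a != h ->
  exists c, [/\ c \in tine F h, 0 < c < size F & par F c = a]) wF).
  by rewrite tine0 inE => ->.
move=> h hh IH; have [pn pl] := wf_par wF hh.
rewrite tineS // inE => /orP[->//|ha] _.
case: (eqVneq a (par F h)) => [e|ne].
  by exists h; split => //; rewrite inE eqxx.
have [c [c1 c2 c3]] := IH ha ne.
by exists c; split => //; rewrite inE c1 orbT.
Qed.

Lemma depth0 F : depth F 0 = 0.
Proof. by rewrite /depth tine0. Qed.

Lemma depthS F v : wf F -> 0 < v < size F -> depth F v = (depth F (par F v)).+1.
Proof.
move=> wF hv; have [pn _] := wf_par wF hv.
rewrite /depth tineS //=; have := root_tine wF pn; by case: (tine F (par F v)).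
Qed.

Implicit Types (K : pred nat) (F : fork).

Definition kept (F : fork) (K : pred nat) : seq nat := filter K (iota 0 (size F)).
Definition compact (F : fork) (K : pred nat) : fork :=
  map (fun v => (index (par F v) (kept F K), lab F v)) (kept F K).

Definition goodK (F : fork) (K : pred nat) := K 0 /\ forall v, 0 < v < size F -> K v -> K (par F v).

Lemma kept_uniq F K : uniq (kept F K).
Proof. by rewrite filter_uniq // iota_uniq. Qed.

Lemma mem_kept F K u : (u \in kept F K) = K u && (u < size F).
Proof. by rewrite mem_filter mem_iota. Qed.

Lemma size_compact F K : size (compact F K) = size (kept F K).
Proof. by rewrite size_map. Qed.

Lemma compact_par F K i : i < size (kept F K) ->
  par (compact F K) i = index (par F (nth 0 (kept F K) i)) (kept F K).
Proof. by move=> h; rewrite /par /compact (nth_map 0). Qed.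

Lemma compact_lab F K i : i < size (kept F K) ->
  lab (compact F K) i = lab F (nth 0 (kept F K) i).
Proof. by move=> h; rewrite /lab /compact (nth_map 0). Qed.

Lemma kept_head F K : wf F -> goodK F K -> kept F K = 0 :: filter K (iota 1 (size F).-1).
Proof.
case=> n0 _ _ [K0 _]; rewrite /kept; case: (size F) n0 => //= n _.
by rewrite K0.
Qed.

Lemma phi0 F K : wf F -> goodK F K -> nth 0 (kept F K) 0 = 0.
Proof. by move=> wF gK; rewrite kept_head. Qed.

Lemma idx0 F K : wf F -> goodK F K -> index 0 (kept F K) = 0.
Proof. by move=> wF gK; rewrite kept_head //= eqxx. Qed.

Lemma phi_props F K i : i < size (kept F K) ->
  [/\ K (nth 0 (kept F K) i), nth 0 (kept F K) i < size F & index (nth 0 (kept F K) i) (kept F K) = i].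
Proof.
move=> h; have := mem_nth 0 h; rewrite mem_kept => /andP[k1 k2]; split => //.
by rewrite index_uniq // kept_uniq.
Qed.

Lemma phi_nz F K i : wf F -> goodK F K -> 0 < i < size (kept F K) -> 0 < nth 0 (kept F K) i.
Proof.
move=> wF gK /andP[i0 h]; rewrite lt0n; apply/negP => /eqP e.
have [_ _ ix] := phi_props h; move: ix; rewrite e idx0 // => e'.
by rewrite -e' in i0.
Qed.

Lemma idx_props F K u : K u -> u < size F ->
  [/\ index u (kept F K) < size (kept F K) & nth 0 (kept F K) (index u (kept F K)) = u].
Proof.
move=> ku un; have uin : u \in kept F K by rewrite mem_kept ku.
by rewrite index_mem uin nth_index.
Qed.

Lemma compact_wf F K : wf F -> goodK F K -> wf (compact F K).
Proof.
move=> wF gK; have [n0 l0 _] := wF; have [K0 Kp] := gK.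
have sz : 0 < size (kept F K) by rewrite kept_head.
split; rewrite ?size_compact //.
  by rewrite compact_lab // phi0.
move=> i /andP[i0 isz].
have [k1 k2 _] := phi_props isz.
have hv : 0 < nth 0 (kept F K) i < size F by rewrite phi_nz ?i0 ?isz.
have [pn pl] := wf_par wF hv.
have kp := Kp _ hv k1.
have [ia ib] := idx_props kp pn.
rewrite compact_par // compact_lab // ia compact_lab // ib; split => //.
Qed.

Lemma compact_tine F K i : wf F -> goodK F K -> i < size (kept F K) ->
  tine (compact F K) i = map (fun u => index u (kept F K)) (tine F (nth 0 (kept F K) i)).
Proof.
move=> wF gK isz; have wG := compact_wf wF gK; have [K0 Kp] := gK.
have [k1 k2 k3] := phi_props isz.
move: (nth 0 (kept F K) i) k1 k2 k3 => v kv vn <-.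
move: v vn kv; apply: (@lab_ind F (fun v => K v -> tine (compact F K) (index v (kept F K)) =
  [seq index u (kept F K) | u <- tine F v]) wF).
  by move=> _; rewrite idx0 // !tine0 /= idx0.
move=> v hv IH kv; have [pn pl] := wf_par wF hv.
have kp := Kp _ hv kv.
have vn : v < size F by case/andP: hv.
have [ia ib] := idx_props kv vn.
have hi : 0 < index v (kept F K) < size (kept F K).
  rewrite ia andbT lt0n; apply/negP => /eqP e.
  by move: ib; rewrite e phi0 // => e'; rewrite -e' in hv.
rewrite (tineS wF hv).
rewrite (tineS wG) ?size_compact //.
rewrite /= compact_par // ib IH //.
Qed.

Lemma compact_depth F K i : wf F -> goodK F K -> i < size (kept F K) ->
  depth (compact F K) i = depth F (nth 0 (kept F K) i).
Proof. by move=> wF gK isz; rewrite /depth compact_tine // size_map. Qed.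

Lemma compact_fork w F K : is_fork w F -> goodK F K ->
  (forall v, v < size F -> honest_vertex w F v -> K v) -> is_fork w (compact F K).
Proof.
move=> fF gK hK; have wF := is_fork_wf fF; have wG := compact_wf wF gK.
have [n0 l0 tr F3 F4] := fF.
have [s0 lG0 trG] := wG.
rewrite size_compact in s0 trG.
split; rewrite ?size_compact //.
- move=> v hv; have [a b] := trG v hv; split => //.
  have [v0 vs] := andP hv.
  rewrite compact_lab //; have [_ pn _] := phi_props vs.
  by have [] := tr (nth 0 (kept F K) v); rewrite ?phi_nz ?v0.
- move=> i hi.
  have ke := kept_head wF gK.
  set e' := filter K (iota 1 (size F).-1) in ke.
  rewrite -[RHS](F3 i hi).
  rewrite (@eq_in_count _ _ (fun j => lab F (nth 0 (kept F K) j) == i)); last first.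
    move=> j; rewrite mem_iota => /andP[j1 j2]; rewrite compact_lab //.
    by move: j2; rewrite ke /= add1n.
  rewrite -(count_map (nth 0 (kept F K)) (fun v => lab F v == i)).
  rewrite map_nth_iota; last by rewrite ke /= subn1.
  rewrite ke /= drop0 take_size /e' count_filter.
  apply: eq_in_count => v; rewrite mem_iota => /andP[v1 v2] /=.
  case: eqP => //= e; apply: hK.
    by move: v2; case: (size F) n0 => // n _; rewrite add1n.
  by rewrite /honest_vertex e hi orbT.
- move=> i j u v hi hj ij /andP[u0 us] /andP[v0 vs] lu lv.
  rewrite !compact_depth //.
  have [_ pu _] := phi_props us; have [_ pv _] := phi_props vs.
  apply: (F4 i j) => //.
  + by rewrite phi_nz ?u0.
  + by rewrite phi_nz ?v0.
  + by rewrite -compact_lab.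
  + by rewrite -compact_lab.
Qed.

Definition Kh (w : seq bool) F : pred nat :=
  fun v => has (fun h => honest_vertex w F h && (v \in tine F h)) (iota 0 (size F)).

Lemma KhP w F v : reflect (exists h, [/\ h < size F, honest_vertex w F h & v \in tine F h]) (Kh w F v).
Proof.
apply: (iffP hasP) => [[h] | [h [h1 h2 h3]]].
  by rewrite mem_iota /= => hn /andP[a b]; exists h.
by exists h; rewrite ?mem_iota ?h1 ?h2.
Qed.

Lemma Kh_good w F : wf F -> goodK F (Kh w F).
Proof.
move=> wF; have [n0 _ _] := wF; split.
  by apply/KhP; exists 0; rewrite n0 /honest_vertex eqxx tine0 inE.
move=> v hv /KhP [h [h1 h2 h3]]; apply/KhP; exists h; split => //.
by apply: (tine_sub wF h1 h3); rewrite tineS // inE tine_self ?orbT //; case: (wf_par wF hv).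
Qed.

Lemma Kh_honest w F v : wf F -> v < size F -> honest_vertex w F v -> Kh w F v.
Proof. by move=> wF vn hv; apply/KhP; exists v; rewrite tine_self. Qed.

Lemma compact_closed w F : is_fork w F -> Defs.closed w (compact F (Kh w F)).
Proof.
move=> fF; have wF := is_fork_wf fF; set K := Kh w F.
have gK : goodK F K by exact: Kh_good.
move=> j /andP[js nl]; rewrite size_compact in js nl.
apply/negPn/negP => nh.
have [kj pj ij] := phi_props js.
set v := nth 0 (kept F K) j in kj pj ij.
have jn0 : j != 0 by apply: contraNneq nh => ->; rewrite /honest_vertex eqxx.
have v0 : 0 < v by rewrite phi_nz // lt0n jn0.
have [h [h1 h2 h3]] : exists h, [/\ h < size F, honest_vertex w F h & v \in tine F h] by exact/KhP.
case: (eqVneq v h) => [evh|nvh].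
  move: nh; rewrite /honest_vertex (negbTE jn0) /= compact_lab // -/v.
  by move: h2; rewrite -evh /honest_vertex (negbTE (lt0n_neq0 v0)) /= => ->.
have [c [c1 c2 c3]] := tine_child wF h1 h3 nvh.
have kc : K c by apply/KhP; exists h.
have [cn] : c < size F by case/andP: c2.
have [ia ib] := idx_props kc cn.
move/negP: nl; apply; apply/hasP; exists (index c (kept F K)).
  rewrite mem_iota /= add1n (ltn_predK js) ia andbT lt0n.
  apply/negP => /eqP e; move: ib; rewrite e phi0 // => e'.
  by move: c2; rewrite -e'.
by rewrite compact_par // ib c3 ij.
Qed.

Lemma Kh_tine w F v a : wf F -> Kh w F v -> v < size F -> a \in tine F v -> Kh w F a.
Proof.
move=> wF /KhP [h [h1 h2 h3]] vn ain; apply/KhP; exists h; split => //.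
exact: (tine_sub wF h1 h3).
Qed.

Lemma trunc_props w F u : is_fork w F -> u < size F -> depth F u = maxlen F ->
  exists v, [/\ v \in tine F u, Kh w F v & maxlen F - depth F v <= reserve w F v].
Proof.
move=> fF un dm; have wF := is_fork_wf fF; have [_ _ tr _ _] := fF.
set K := Kh w F; have [K0 _] : goodK F K by exact: Kh_good.
set s := tine F u; set k := find K s; set v := nth 0 s k; exists v.
have hs : has K s by apply/hasP; exists 0 => //; exact: root_tine.
have ks : k < size s by rewrite -has_find.
have vin : v \in s by exact: mem_nth.
have kv : K v by exact: nth_find.
split => //.
have dv : depth F u = depth F v + k.
  rewrite /depth -/s -(tine_drop wF un ks) size_drop -/s.
  case: (size s) ks => // n; rewrite ltnS => kn; rewrite subSn // /= subnK //.
rewrite -dm dv addKn.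
set L := take k s.
have sz : size L = k by rewrite size_takel // ltnW.
have [srt _ _] := tine_props wF un.
have uL : uniq [seq lab F x | x <- L].
  rewrite map_inj_in_uniq; first by rewrite take_uniq // /s tine_cc // cc_uniq.
  move=> x y xin yin e; exact: (tine_lab_inj wF un (mem_take xin) (mem_take yin) e).
rewrite -sz -(size_map (lab F)) /reserve -size_filter.
apply: uniq_leq_size => // l /mapP [x xin ->].
have xs : x \in s := mem_take xin.
have ix := index_ltn xin.
have ex : nth 0 s (index x s) = x by exact: nth_index.
have kx : K x = false by rewrite -ex; exact: before_find.
have x0 : 0 < x by rewrite lt0n; apply: contraFneq kx => ->.
have xn : x < size F by exact: tine_lt xs.
have [_ _ lw] : [/\ par F x < size F, lab F (par F x) < lab F x & lab F x <= size w] by apply: tr; rewrite x0 xn.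
have lp : 0 < lab F x by apply: lab_pos; rewrite ?x0.
rewrite mem_filter mem_iota lp /= add1n ltnS lw andbT.
have -> : lab F v < lab F x.
  rewrite -ex; have := sorted_ltn_nth (@labgt_trans F) 0 srt; move=> /(_ (index x s) k); apply.
  - by rewrite inE (ltn_trans ix ks).
  - by rewrite inE.
  - by [].
rewrite andbT /adv_idx lp lw /=.
have : ~~ honest_vertex w F x by apply: contraFN kx => h; exact: Kh_honest.
by rewrite /honest_vertex /honest_idx lp lw (negbTE (lt0n_neq0 x0)) /= negbK.
Qed.

Lemma maxlen_compact F K : wf F -> goodK F K -> maxlen (compact F K) <= maxlen F.
Proof.
move=> wF gK; apply/bigmax_leqP => i _.
have hi : i < size (kept F K) by rewrite -size_compact.
rewrite compact_depth //; have [_ pn _] := phi_props hi.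
exact: (leq_bigmax_cond (Ordinal pn) (isT : xpredT _)).
Qed.

Lemma depth_le_maxlen F v : v < size F -> depth F v <= maxlen F.
Proof. move=> vn; exact: (leq_bigmax_cond (Ordinal vn) (isT : xpredT _)). Qed.

Lemma main_fork w F m u1 u2 :
  is_fork w F -> u1 < size F -> u2 < size F -> depth F u1 = maxlen F -> depth F u2 = maxlen F ->
  ((exists a b, [/\ a \in tine F u1, b \in tine F u2, lab F a = m.+1, lab F b = m.+1 & a <> b])
   \/ ((exists a, a \in tine F u1 /\ lab F a = m.+1) /\
       ~ (exists b, b \in tine F u2 /\ lab F b = m.+1))) ->
  exists G, [/\ is_fork w G, Defs.closed w G & (0 <= mu_fork m w G)%R].
Proof.
move=> fF u1n u2n d1 d2 hns.
have wF := is_fork_wf fF; set K := Kh w F.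
have gK : goodK F K by exact: Kh_good.
exists (compact F K); split.
- apply: compact_fork => // v vn hv; exact: Kh_honest.
- exact: compact_closed.
have [v1 [v1in kv1 r1]] := trunc_props fF u1n d1.
have [v2 [v2in kv2 r2]] := trunc_props fF u2n d2.
have v1n : v1 < size F by exact: tine_lt v1in.
have v2n : v2 < size F by exact: tine_lt v2in.
have [i1s e1] := idx_props kv1 v1n.
have [i2s e2] := idx_props kv2 v2n.
set i1 := index v1 (kept F K) in i1s e1.
set i2 := index v2 (kept F K) in i2s e2.
have reach_ok : forall v i, K v -> v < size F -> i < size (kept F K) -> nth 0 (kept F K) i = v ->
    maxlen F - depth F v <= reserve w F v -> (0 <= reach w (compact F K) i)%R.
  move=> v i kv vn hi ei hr.
  rewrite /reach subr_ge0 lez_nat.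
  have -> : reserve w (compact F K) i = reserve w F v by rewrite /reserve compact_lab // ei.
  rewrite /gap compact_depth // ei.
  apply: leq_trans hr; apply: leq_sub2r; exact: maxlen_compact.
have i1G : i1 < size (compact F K) by rewrite size_compact.
have i2G : i2 < size (compact F K) by rewrite size_compact.
apply: (bigmax_sup (Ordinal i1G, Ordinal i2G)) => /=; last first.
  by rewrite le_min; apply/andP; split; [exact: (reach_ok v1) | exact: (reach_ok v2)].
rewrite /disjoint_over; apply/allP => x.
rewrite (compact_tine wF gK i1s) e1 => /mapP [a ain ->].
rewrite (compact_tine wF gK i2s) e2; apply/implyP => /mapP [b bin eab].
have ka : K a by exact: (Kh_tine wF kv1 v1n ain).
have kb : K b by exact: (Kh_tine wF kv2 v2n bin).
have an : a < size F by exact: tine_lt ain.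
have bn : b < size F by exact: tine_lt bin.
have [ias iae] := idx_props ka an.
have [_ ibe] := idx_props kb bn.
have eab' : a = b by rewrite -iae eab ibe.
subst b.
rewrite compact_lab // iae leqNgt; apply/negP => lm.
have a1 : a \in tine F u1 by exact: (tine_sub wF u1n v1in).
have a2 : a \in tine F u2 by exact: (tine_sub wF u2n v2in).
case: hns => [[a' [b' [a'in b'in la lb nab]]] | [[a' [a'in la]] nb]].
- have a'a : a' \in tine F a by apply: (tine_anc wF u1n a'in a1); rewrite la.
  have a'2 : a' \in tine F u2 by exact: (tine_sub wF u2n a2).
  by apply: nab; apply: (tine_lab_inj wF u2n a'2 b'in); rewrite la lb.
- have a'a : a' \in tine F a by apply: (tine_anc wF u1n a'in a1); rewrite la.
  apply: nb; exists a'; split => //; exact: (tine_sub wF u2n a2).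
Qed.

Lemma wf_single : wf [:: (0, 0)].
Proof. by split => // v /andP[v0 v1]; move: v0 v1; case: v. Qed.

Lemma not_settled0 F : wf F -> ~ not_settled 0 F.
Proof.
move=> wF [u1 [u2 [u1n u2n _ _ h]]].
have lab0 : forall u a, u < size F -> a \in tine F u -> lab F a = 0 -> a = 0.
  move=> u a un ain la; have an := tine_lt wF un ain.
  case: (posnP a) => // a0; have := lab_pos wF (andPi a0 an).
  by rewrite la.
case: h => [[a [b [ain bin la lb nab]]] | [_ nb]].
  by apply: nab; rewrite (lab0 _ _ u1n ain la) (lab0 _ _ u2n bin lb).
apply: nb; exists 0; split; first exact: root_tine.
by case: wF.
Qed.

Lemma pointwise s k (w : seq bool) P : legal_play w P -> wins s k w P ->
  exists x y z : seq bool, [/\ w = x ++ y ++ z, (size x).+1 = s, (k < size y)%N & rel_margin_nonneg x y].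
Proof.
move=> [A0 hP] [t [/andP[st tw] ns]].
have wFt : wf (Ap P t).
  case: (posnP t) => [->|t0]; first by rewrite A0; exact: wf_single.
  have [_ [fA _]] := hP t (andPi t0 tw); exact: is_fork_wf fA.
case: s st ns => [|m] st ns; first by case: (not_settled0 wFt ns).
have t0 : 0 < t by apply: leq_trans st; rewrite addSn.
have [_ [fA _]] := hP t (andPi t0 tw).
have [u1 [u2 [u1n u2n d1 d2 h]]] := ns.
have [G [fG cG mG]] := main_fork fA u1n u2n d1 d2 h.
have mt : m <= t by apply: leq_trans st; rewrite addSn ltnW // ltnS leq_addr.
exists (take m w), (drop m (take t w)), (drop t w).
have sx : size (take m w) = m by rewrite size_takel // (leq_trans mt tw).
have xy : take m w ++ drop m (take t w) = take t w by rewrite -{1}(minn_idPl mt) take_min cat_take_drop.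
split.
- by rewrite catA xy cat_take_drop.
- by rewrite sx.
- rewrite size_drop size_takel //; move: st; rewrite addSn => st.
  by rewrite ltn_subRL.
- by exists G; rewrite xy sx.
Qed.

Theorem lemma5 (R : realFieldType) (s k T : nat) (D : {ffun T.-tuple bool -> R})
  (HD : distribution D)
  (A : T.-tuple bool -> play) (HA : forall w : T.-tuple bool, legal_play w (A w)) :
  (Pr D (fun w => wins s k w (A w))
   <= Pr D (fun w => exists x y z : seq bool,
              [/\ (w : seq bool) = x ++ y ++ z, (size x).+1 = s, (k < size y)%N
                & rel_margin_nonneg x y]))%R.
Proof.
have [D0 _] := HD.
rewrite /Pr [X in (X <= _)%R]big_mkcond [X in (_ <= X)%R]big_mkcond /=.
apply: ler_sum => w _.
case: asboolP => h1; case: asboolP => h2 //.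
by case: h2; exact: (pointwise (HA w) h1).
Qed.
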